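(* Let $M\ge1$ be an integer and $P_{\max},\sigma^2,\beta>0$, $b\ge1$, and $c_b=\frac{2^b}{\pi}\sin\frac{\pi}{2^b}$. For $N>0$ and $K\in\{1,\dots,M\}$ define $$R_s^{\mathrm D}(K)=K\log_2\!\left(1+\frac{P_{\max}MN^2\beta c_b^2}{K^3\sigma^2}\right),\qquad R_s^{\mathrm C}=\log_2\!\left(1+\frac{P_{\max}MN^2\beta c_b^2}{\sigma^2}\right).$$ The equation $g(x):=\ln(1+x)-3+\frac{3}{1+x}=0$ has a unique solution $C_{\mathrm{th}}$ in $(0,\infty)$. Moreover, (i) if $N\le\sqrt{\frac{C_{\mathrm{th}}\sigma^2}{P_{\max}M\beta c_b^2}}$, then $R_s^{\mathrm D}(K)\le R_s^{\mathrm C}$ for all $K\in\{1,\dots,M\}$; (ii) if $N\ge M\sqrt{\frac{C_{\mathrm{th}}\sigma^2}{P_{\max}\beta c_b^2}}$, then $R_s^{\mathrm D}(K)\ge R_s^{\mathrm C}$ for all $K\in\{1,\dots,M\}$.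
   Context: Interpretation: $R_s^{\mathrm D}(K)$ and $R_s^{\mathrm C}$ are the maximum sum-rates of an $M$-antenna base station serving $K$ users aided by $N$ IRS elements with $b$-bit phase quantization, under a distributed-IRS deployment (K IRSs of $N/K$ elements each, one per user) and a centralized-IRS deployment (one $N$-element IRS), respectively, with pure line-of-sight homogeneous channels of common two-hop path loss $\beta=(\rho_{g,1}\rho_{r,1})^2$, transmit power $P_{\max}$ and noise power $\sigma^2$. *)

(* Defs.v *)
From Stdlib Require Import Reals.
Open Scope R_scope.

Definition log2 (x : R) : R := ln x / ln 2.

Definition c_b (b : nat) : R := (2 ^ b / PI) * sin (PI / 2 ^ b).

Definition RsD (Pmax sigma2 beta : R) (M : nat) (N : R) (b K : nat) : R :=
  INR K * log2 (1 + Pmax * INR M * N ^ 2 * beta * (c_b b) ^ 2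
                    / (INR K ^ 3 * sigma2)).

Definition RsC (Pmax sigma2 beta : R) (M : nat) (N : R) (b : nat) : R :=
  log2 (1 + Pmax * INR M * N ^ 2 * beta * (c_b b) ^ 2 / sigma2).

Definition gth (x : R) : R := ln (1 + x) - 3 + 3 / (1 + x).

(* Main.v *)
Require Import Defs.
From Coquelicot Require Import Coquelicot.
From Stdlib Require Import Reals Lra Psatz Ranalysis5.
Open Scope R_scope.

Lemma g_der y : -1 < y -> is_derive gth y ((y - 2) / (1 + y) ^ 2).
Proof.
  intros Hy. unfold gth. auto_derive.
  - split; [lra|split; [lra|auto]].
  - field. lra.
Qed.

Lemma cont_of_der f df x : is_derive f x df -> continuity_pt f x.
Proof.
  intros H. apply continuity_pt_filterlim. apply (ex_derive_continuous f). exists df; exact H.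
Qed.

Lemma mono_le f df a b : a <= b ->
  (forall x, a <= x <= b -> is_derive f x (df x)) ->
  (forall x, a <= x <= b -> 0 <= df x) -> f a <= f b.
Proof.
  intros Hab Hd Hp. destruct (Req_dec a b) as [->|Hne]; [lra|].
  destruct (MVT_gen f a b df) as [c [Hc He]].
  - intros x Hx. rewrite Rmin_left in Hx by lra. rewrite Rmax_right in Hx by lra. apply Hd; lra.
  - intros x Hx. rewrite Rmin_left in Hx by lra. rewrite Rmax_right in Hx by lra.
    eapply cont_of_der. apply Hd; lra.
  - rewrite Rmin_left in Hc by lra. rewrite Rmax_right in Hc by lra.
    specialize (Hp c Hc). nra.
Qed.

Lemma g0 : gth 0 = 0.
Proof. unfold gth. rewrite Rplus_0_r, ln_1. field. Qed.

Lemma ln3 : ln 3 < 2.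
Proof.
  assert (H1 := exp_ineq1 1 ltac:(lra)).
  assert (exp 2 = exp 1 * exp 1) by (rewrite <- exp_plus; f_equal; lra).
  rewrite <- (ln_exp 2). apply ln_increasing; nra.
Qed.

Lemma g2 : gth 2 < 0.
Proof. unfold gth. replace (1+2) with 3 by lra. assert (H:=ln3). 
  replace (3/3) with 1 by field. lra. Qed.

Lemma g_neg y : 0 < y <= 2 -> gth y < 0.
Proof.
  intros Hy. destruct (Req_dec y 2) as [->|Hne]; [apply g2|].
  assert (H : - gth 0 < - gth y).
  { apply (incr_function_le (fun z => - gth z) 0 y (fun z => - ((z - 2) / (1 + z) ^ 2))).
    - intros x H1 H2. simpl in H1, H2. apply (is_derive_opp gth x). apply g_der. lra.
    - intros x H1 H2. simpl in H1, H2. 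
      assert (0 < (1+x)^2) by nra.
      assert ((x - 2) / (1 + x) ^ 2 < 0). { apply Rdiv_neg_pos; lra. } lra.
    - simpl; lra.
    - lra.
    - simpl; lra. }
  rewrite g0 in H. lra.
Qed.

Lemma gder_nonneg z : 2 <= z -> 0 <= (z - 2) / (1 + z) ^ 2.
Proof. intros. assert (0 < (1+z)^2) by nra. apply Rdiv_le_0_compat; lra. Qed.

Lemma g_incr x y : 2 <= x -> x < y -> gth x < gth y.
Proof.
  intros Hx Hxy.
  assert (A : gth x <= gth ((x+y)/2)).
  { apply (mono_le gth (fun z => (z - 2) / (1 + z) ^ 2)).
    - lra.
    - intros z Hz. apply g_der. lra.
    - intros z Hz. apply gder_nonneg. lra. }
  assert (B : gth ((x+y)/2) < gth y).
  { apply (incr_function gth 2 p_infty (fun z => (z - 2) / (1 + z) ^ 2)).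
    - intros z H1 H2. simpl in H1. apply g_der. lra.
    - intros z H1 H2. simpl in H1. assert (0 < (1+z)^2) by nra.
      apply Rdiv_lt_0_compat; lra.
    - simpl; lra.
    - lra.
    - simpl; auto. }
  lra.
Qed.

Lemma zero_gt2 C : 0 < C -> gth C = 0 -> 2 < C.
Proof.
  intros H1 H2. destruct (Rle_lt_dec C 2) as [H|H]; auto.
  assert (gth C < 0) by (apply g_neg; lra). lra.
Qed.

Lemma g_nonpos C y : 0 < C -> gth C = 0 -> 0 < y <= C -> gth y <= 0.
Proof.
  intros H1 H2 Hy. destruct (Rle_lt_dec y 2) as [H|H].
  - left. apply g_neg. lra.
  - destruct (Req_dec y C) as [->|Hne]; [lra|].
    assert (gth y < gth C) by (apply g_incr; lra). lra.
Qed.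

Lemma g_nonneg C y : 0 < C -> gth C = 0 -> C <= y -> 0 <= gth y.
Proof.
  intros H1 H2 Hy. assert (H3 := zero_gt2 C H1 H2).
  destruct (Req_dec y C) as [->|Hne]; [lra|].
  assert (gth C < gth y) by (apply g_incr; lra). lra.
Qed.

Lemma g_exists_unique : exists! C : R, 0 < C /\ gth C = 0.
Proof.
  assert (E3 : 1 + 3 < exp 3) by (apply exp_ineq1; lra).
  assert (Hp : 0 < gth (exp 3 - 1)).
  { unfold gth. replace (1 + (exp 3 - 1)) with (exp 3) by lra. rewrite ln_exp.
    assert (0 < 3 / exp 3) by (apply Rdiv_lt_0_compat; lra). lra. }
  destruct (IVT_interv gth 2 (exp 3 - 1)) as [z [Hz Hgz]].
  - intros a Ha. eapply cont_of_der. apply g_der. lra.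
  - lra.
  - apply g2.
  - exact Hp.
  - exists z. split.
    + split; [lra|exact Hgz].
    + intros C [HC HgC]. assert (HC2 := zero_gt2 C HC HgC).
      assert (Hz2 : 2 < z) by (apply zero_gt2; auto; lra).
      destruct (Rtotal_order z C) as [H|[H|H]]; auto.
      * assert (gth z < gth C) by (apply g_incr; lra). lra.
      * assert (gth C < gth z) by (apply g_incr; lra). lra.
Qed.

Lemma f_der x t : 0 < x -> 0 < t ->
  is_derive (fun t => t * ln (1 + x / t ^ 3)) t (gth (x / t ^ 3)).
Proof.
  intros Hx Ht. assert (0 < t^3) by (apply pow_lt; lra).
  assert (0 < x / t^3) by (apply Rdiv_lt_0_compat; lra).
  assert (E : x * / (t * (t * (t * 1))) = x / t^3) by (unfold Rdiv; simpl; ring).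
  auto_derive.
  - rewrite E. repeat split; try lra.
  - rewrite E. unfold gth. field. split; try lra.
Qed.

Lemma partA C x k : 0 < C -> gth C = 0 -> 0 < x <= C -> 1 <= k ->
  k * ln (1 + x / k ^ 3) <= ln (1 + x).
Proof.
  intros HC Hg Hx Hk.
  assert (H := mono_le (fun t => - (t * ln (1 + x / t ^ 3))) (fun t => - gth (x / t ^ 3)) 1 k Hk).
  assert (E : 1 * ln (1 + x / 1 ^ 3) = ln (1 + x)).
  { rewrite pow1, Rdiv_1_r, Rmult_1_l. reflexivity. }
  assert (- (1 * ln (1 + x / 1 ^ 3)) <= - (k * ln (1 + x / k ^ 3))).
  { apply H.
    - intros t Ht. apply (is_derive_opp (fun t => t * ln (1 + x / t ^ 3))). apply f_der; lra.
    - intros t Ht. assert (1 <= t^3) by (apply pow_R1_Rle; lra).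
      assert (0 < x / t^3) by (apply Rdiv_lt_0_compat; lra).
      assert (x / t^3 <= x). { apply Rmult_le_reg_r with (t^3); [lra|].
        unfold Rdiv. rewrite Rmult_assoc, Rinv_l by lra. nra. }
      assert (gth (x / t^3) <= 0) by (apply (g_nonpos C); auto; lra). lra. }
  lra.
Qed.

Lemma partB C x k : 0 < C -> gth C = 0 -> 0 < x -> k ^ 3 * C <= x -> 1 <= k ->
  ln (1 + x) <= k * ln (1 + x / k ^ 3).
Proof.
  intros HC Hg Hx Hxk Hk.
  assert (H := mono_le (fun t => (t * ln (1 + x / t ^ 3))) (fun t => gth (x / t ^ 3)) 1 k Hk).
  assert (E : 1 * ln (1 + x / 1 ^ 3) = ln (1 + x)).
  { rewrite pow1, Rdiv_1_r, Rmult_1_l. reflexivity. }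
  rewrite <- E. apply H.
  - intros t Ht. apply f_der; lra.
  - intros t Ht. assert (0 < t^3) by (apply pow_lt; lra).
    assert (t^3 <= k^3) by (apply pow_incr; lra).
    assert (C <= x / t^3). { apply Rmult_le_reg_r with (t^3); [lra|].
        unfold Rdiv. rewrite Rmult_assoc, Rinv_l by lra. nra. }
    apply (g_nonneg C); auto.
Qed.

Lemma cb_pos b : (1 <= b)%nat -> 0 < c_b b.
Proof.
  intros Hb. unfold c_b.
  assert (2 <= 2 ^ b). { replace 2 with (2^1) at 1 by ring. apply Rle_pow; [lra|lia]. }
  assert (HP := PI_RGT_0).
  apply Rmult_lt_0_compat.
  - apply Rdiv_lt_0_compat; lra.
  - apply sin_gt_0. apply Rdiv_lt_0_compat; lra.
    apply Rmult_lt_reg_r with (2^b); [lra|]. unfold Rdiv. rewrite Rmult_assoc, Rinv_l by lra. nra.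
Qed.

Theorem theorem1 (M : nat) (Pmax sigma2 beta : R) (b : nat) :
  (1 <= M)%nat -> 0 < Pmax -> 0 < sigma2 -> 0 < beta -> (1 <= b)%nat ->
  (exists! C : R, 0 < C /\ gth C = 0) /\
  (forall Cth : R, 0 < Cth -> gth Cth = 0 ->
     (forall N : R, 0 < N ->
        N <= sqrt (Cth * sigma2 / (Pmax * INR M * beta * (c_b b) ^ 2)) ->
        forall K : nat, (1 <= K <= M)%nat ->
          RsD Pmax sigma2 beta M N b K <= RsC Pmax sigma2 beta M N b) /\
     (forall N : R, 0 < N ->
        INR M * sqrt (Cth * sigma2 / (Pmax * beta * (c_b b) ^ 2)) <= N ->
        forall K : nat, (1 <= K <= M)%nat ->
          RsC Pmax sigma2 beta M N b <= RsD Pmax sigma2 beta M N b K)).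
Proof.
  intros HM HP Hs Hb Hbb. split; [apply g_exists_unique|].
  intros Cth HC Hg.
  assert (Hc := cb_pos b Hbb). set (c := c_b b) in *.
  assert (Hc2 : 0 < c ^ 2) by (apply pow_lt; lra).
  assert (HMr : 1 <= INR M) by (apply (le_INR 1); lia).
  assert (Hl2 : 0 < ln 2) by (rewrite <- ln_1; apply ln_increasing; lra).
  assert (HQ : 0 < Pmax * INR M * beta * c ^ 2) by (apply Rmult_lt_0_compat; [apply Rmult_lt_0_compat; [apply Rmult_lt_0_compat|]|]; lra).
  assert (HQ' : 0 < Pmax * beta * c ^ 2) by (apply Rmult_lt_0_compat; [apply Rmult_lt_0_compat|]; lra).
  assert (Key : forall N K, (1 <= K)%nat ->
     RsD Pmax sigma2 beta M N b K =
       INR K * ln (1 + (Pmax * INR M * N ^ 2 * beta * c ^ 2 / sigma2) / INR K ^ 3) / ln 2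
     /\ RsC Pmax sigma2 beta M N b = ln (1 + Pmax * INR M * N ^ 2 * beta * c ^ 2 / sigma2) / ln 2).
  { intros N K HK. assert (1 <= INR K) by (apply (le_INR 1); lia).
    assert (0 < INR K ^ 3) by (apply pow_lt; lra).
    unfold RsD, RsC, log2. fold c. split; [|reflexivity].
    replace (Pmax * INR M * N ^ 2 * beta * c ^ 2 / (INR K ^ 3 * sigma2)) with
      (Pmax * INR M * N ^ 2 * beta * c ^ 2 / sigma2 / INR K ^ 3) by (field; lra).
    unfold Rdiv at 1 4. ring. }
  split.
  - intros N HN HNs K HK. destruct (Key N K ltac:(lia)) as [E1 E2]. rewrite E1, E2.
    apply Rmult_le_compat_r; [left; apply Rinv_0_lt_compat; lra|].
    assert (1 <= INR K) by (apply (le_INR 1); lia).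
    set (D := Cth * sigma2 / (Pmax * INR M * beta * c ^ 2)) in *.
    assert (HD : 0 < D) by (apply Rdiv_lt_0_compat; nra).
    assert (Hss := sqrt_sqrt D ltac:(lra)).
    assert (HN2 : N ^ 2 <= D) by nra.
    apply (partA Cth); auto. split.
    + apply Rdiv_lt_0_compat; [|lra]. assert (0 < N^2) by (apply pow_lt; lra).
      replace (Pmax * INR M * N ^ 2 * beta * c ^ 2) with ((Pmax * INR M * beta * c ^ 2) * N^2) by ring.
      nra.
    + apply Rmult_le_reg_r with sigma2; [lra|].
      unfold Rdiv. rewrite Rmult_assoc, Rinv_l by lra.
      replace (Pmax * INR M * N ^ 2 * beta * c ^ 2 * 1) with ((Pmax * INR M * beta * c ^ 2) * N^2) by ring.
      replace (Cth * sigma2) with ((Pmax * INR M * beta * c ^ 2) * D) by (unfold D; field; lra).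
      apply Rmult_le_compat_l; lra.
  - intros N HN HNs K HK. destruct (Key N K ltac:(lia)) as [E1 E2]. rewrite E1, E2.
    apply Rmult_le_compat_r; [left; apply Rinv_0_lt_compat; lra|].
    assert (1 <= INR K) by (apply (le_INR 1); lia).
    assert (INR K <= INR M) by (apply le_INR; lia).
    set (D := Cth * sigma2 / (Pmax * beta * c ^ 2)) in *.
    assert (HD : 0 < D) by (apply Rdiv_lt_0_compat; nra).
    assert (Hss := sqrt_sqrt D ltac:(lra)).
    assert (Hs0 := sqrt_pos D).
    assert (H0m : 0 <= INR M * sqrt D) by (apply Rmult_le_pos; lra).
    assert (HN2 : INR M ^ 2 * D <= N ^ 2).
    { assert (Hq : (INR M * sqrt D) ^ 2 = INR M ^ 2 * D).
      { replace ((INR M * sqrt D)^2) with (INR M^2 * (sqrt D * sqrt D)) by ring. rewrite Hss. reflexivity. }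
      rewrite <- Hq. apply pow_incr; lra. }
    assert (HK3 : INR K ^ 3 <= INR M ^ 3) by (apply pow_incr; lra).
    apply (partB Cth); auto.
    + apply Rdiv_lt_0_compat; [|lra]. assert (0 < N^2) by (apply pow_lt; lra).
      replace (Pmax * INR M * N ^ 2 * beta * c ^ 2) with ((Pmax * INR M * beta * c ^ 2) * N^2) by ring.
      nra.
    + apply Rle_trans with (INR M ^ 3 * Cth); [apply Rmult_le_compat_r; lra|].
      replace (Pmax * INR M * N ^ 2 * beta * c ^ 2) with ((Pmax * beta * c ^ 2) * INR M * N^2) by ring.
      replace (INR M ^ 3 * Cth) with ((Pmax * beta * c ^ 2) * INR M * (INR M ^ 2 * D) / sigma2) by (unfold D; field; lra).
      unfold Rdiv. apply Rmult_le_compat_r; [left; apply Rinv_0_lt_compat; lra|].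
      apply Rmult_le_compat_l; [|lra]. nra.
Qed.
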